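(* Let $G$ be an $n$-player stage game (mixed strategies allowed). If there exist a positive integer $T$ and an SPE of $G(T)$ in which locally suboptimal behavior occurs, then there exists a strategy profile $\hat\sigma=(\hat\sigma_1,\dots,\hat\sigma_n)\in\prod_i\Delta A_i$ with $I(G)\subseteq B(\hat\sigma)$ and $B(\hat\sigma)\ne[n]$.
   Context: An $n$-player stage game $G$ has finite nonempty action sets $A_1,\dots,A_n$ and payoffs $u_i:A_1\times\dots\times A_n\to\mathbb{R}$, extended to mixed profiles by expectation. $\mathrm{Nash}(G)$ is the set of mixed Nash equilibria of $G$, $V_i=\{u_i(\sigma):\sigma\in\mathrm{Nash}(G)\}$, $[n]=\{1,\dots,n\}$, $I(G)=\{i:|V_i|=1\}$, and for a profile $\sigma$, $B(\sigma)=\{i:\sigma_i$ is a best response to $\sigma_{-i}\}$. $G(T)$ is the $T$-round repetition of $G$ with realized action profiles observed after each round and payoff equal to the expected sum of stage payoffs; a strategy of player $i$ is a map $\mu_i$ from histories $\bigcup_{k=0}^{T-1}(A_1\times\dots\times A_n)^k$ to $\Delta A_i$. A profile $\mu$ is an SPE if for every $0\le k<T$ and history $h$ of length $k$, the continuation $\mu_{|h}$ is a Nash equilibrium of $G(T-k)$. Locally suboptimal behavior occurs in an SPE $\mu$ if for some history $h$ of length $k<T$, $(\mu_1(h),\dots,\mu_n(h))\notin\mathrm{Nash}(G)$. *)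

(* Defs.v *)
From HB Require Import structures.
From mathcomp Require Import all_boot all_order all_algebra.
From mathcomp Require Import reals.
Set Implicit Arguments. Unset Strict Implicit. Unset Printing Implicit Defensive.
Import Order.TTheory GRing.Theory Num.Theory.
Local Open Scope ring_scope.

Section StageGame.
Variables (R : realType) (n : nat) (A : 'I_n -> finType).

Definition prof := {dffun forall j : 'I_n, A j}.
Definition mprof := forall j : 'I_n, {ffun A j -> R}.

Definition is_mixed (j : 'I_n) (s : {ffun A j -> R}) : Prop :=
  (forall a, 0 <= s a) /\ \sum_(a : A j) s a = 1.

Definition is_mixed_profile (sigma : mprof) : Prop :=
  forall j, is_mixed (sigma j).

Definition prob_prof (sigma : mprof) (a : prof) : R :=
  \prod_(j < n) sigma j (a j).

Variable u : 'I_n -> prof -> R.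

Definition exp_pay (i : 'I_n) (sigma : mprof) : R :=
  \sum_(a : prof) prob_prof sigma a * u i a.

Definition best_response (sigma : mprof) (i : 'I_n) : Prop :=
  forall tau : {ffun A i -> R}, is_mixed tau ->
    exp_pay i (dfwith sigma tau) <= exp_pay i sigma.

Definition Nash (sigma : mprof) : Prop :=
  is_mixed_profile sigma /\ forall i, best_response sigma i.

Definition Vset (i : 'I_n) (x : R) : Prop :=
  exists sigma, Nash sigma /\ exp_pay i sigma = x.

(* i \in I(G)  iff  |V_i| = 1 *)
Definition in_IG (i : 'I_n) : Prop :=
  exists v, forall x, Vset i x <-> x = v.

(* histories are sequences of realized pure profiles; a strategy profile
   maps each history to a mixed profile (player i's strategy is h |-> mu h i) *)
Definition sprof := seq prof -> mprof.

Definition is_strategy (T : nat) (i : 'I_n) (s : seq prof -> {ffun A i -> R}) :=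
  forall h : seq prof, (size h < T)%N -> is_mixed (s h).

Definition is_strat_prof (T : nat) (mu : sprof) : Prop :=
  forall h : seq prof, (size h < T)%N -> is_mixed_profile (mu h).

Fixpoint cont_pay (i : 'I_n) (k : nat) (mu : sprof) (h : seq prof) : R :=
  match k with
  | 0 => 0
  | k'.+1 => \sum_(a : prof) prob_prof (mu h) a * (u i a + cont_pay i k' mu (rcons h a))
  end.

Definition rep_pay (i : 'I_n) (T : nat) (mu : sprof) : R := cont_pay i T mu [::].

Definition deviate (mu : sprof) (i : 'I_n) (s : seq prof -> {ffun A i -> R}) : sprof :=
  fun h => dfwith (mu h) (s h).

Definition continuation (mu : sprof) (h : seq prof) : sprof :=
  fun h' => mu (h ++ h').

Definition rep_Nash (T : nat) (mu : sprof) : Prop :=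
  is_strat_prof T mu /\
  forall i (s : seq prof -> {ffun A i -> R}), is_strategy T s ->
    rep_pay i T (deviate mu s) <= rep_pay i T mu.

Definition SPE (T : nat) (mu : sprof) : Prop :=
  is_strat_prof T mu /\
  forall h : seq prof, (size h < T)%N -> rep_Nash (T - size h) (continuation mu h).

Definition locally_suboptimal (T : nat) (mu : sprof) : Prop :=
  exists h : seq prof, (size h < T)%N /\ ~ Nash (mu h).

End StageGame.

(* Main.v *)
Require Import Defs.
From mathcomp Require Import all_boot all_order all_algebra.
From mathcomp Require Import reals.
From mathcomp Require Import zify.
From Stdlib Require Import Classical FunctionalExtensionality.
Import GRing.Theory Num.Theory.
Local Open Scope ring_scope.
Set Implicit Arguments. Unset Strict Implicit.

Lemma sum_prod_dep (R : realType) (n : nat) (A : 'I_n -> finType)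
  (F : forall j : 'I_n, {ffun A j -> R}) :
  \sum_(a : {dffun forall j : 'I_n, A j}) \prod_(j < n) F j (a j) =
  \prod_(j < n) \sum_(x : A j) F j x.
Proof.
transitivity (\prod_(j < n) \sum_(t in tagged_with A j) untag 0 (F j) t); last first.
  by apply: eq_bigr => j _; rewrite (big_tag (fun i => F i)).
rewrite bigA_distr_big_dep.
have := @big_fprod R 0 1 *%R +%R _ A F.
move=> <-.
rewrite (reindex (@fprod_of_dffun _ A)) /=; last exact/onW_bij/fprod_of_dffun_bij.
apply: eq_bigr => a _; apply: eq_bigr => j _.
by rewrite /fprod_of_dffun fprodE.
Qed.

Lemma sum_prob (R : realType) (n : nat) (A : 'I_n -> finType) (sigma : mprof R A) :
  is_mixed_profile sigma -> \sum_(a : prof A) prob_prof sigma a = 1.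
Proof.
move=> H; rewrite /prob_prof sum_prod_dep; apply: big1 => j _; by case: (H j).
Qed.

Lemma pay_split (R : realType) (n : nat) (A : 'I_n -> finType)
  (u : 'I_n -> prof A -> R) i (sigma : mprof R A) (c : R) :
  \sum_(a : prof A) prob_prof sigma a * (u i a + c) =
  exp_pay u i sigma + c * \sum_(a : prof A) prob_prof sigma a.
Proof.
rewrite /exp_pay; under eq_bigr do rewrite mulrDr.
rewrite big_split /= mulr_sumr; congr (_ + _); apply: eq_bigr => a _.
by rewrite mulrC.
Qed.

Lemma cont_shift (R : realType) (n : nat) (A : 'I_n -> finType)
  (u : 'I_n -> prof A -> R) i m (mu : sprof R A) h h' :
  cont_pay u i m (continuation mu h) h' = cont_pay u i m mu (h ++ h').
Proof.
elim: m h' => //= m IH h'; apply: eq_bigr => a _.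
by rewrite IH rcons_cat.
Qed.

Lemma cont_congr (R : realType) (n : nat) (A : 'I_n -> finType)
  (u : 'I_n -> prof A -> R) i m (mu1 mu2 : sprof R A) h0 :
  (forall h'', mu1 (h0 ++ h'') = mu2 (h0 ++ h'')) ->
  cont_pay u i m mu1 h0 = cont_pay u i m mu2 h0.
Proof.
elim: m h0 => //= m IH h0 E.
have E0 := E [::]; rewrite cats0 in E0; rewrite E0.
apply: eq_bigr => a _; congr (_ * (_ + _)); apply: IH => h''.
by rewrite cat_rcons E.
Qed.

Lemma dfwith_id (R : realType) (n : nat) (A : 'I_n -> finType)
  (sigma : mprof R A) i : dfwith sigma (sigma i) = sigma.
Proof.
apply: functional_extensionality_dep => j.
case: (eqVneq i j) => [<-|ne]; [by rewrite dfwith_in | by rewrite dfwith_out].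
Qed.

Lemma mixed_dfwith (R : realType) (n : nat) (A : 'I_n -> finType)
  (sigma : mprof R A) i (tau : {ffun A i -> R}) :
  is_mixed_profile sigma -> is_mixed tau -> is_mixed_profile (dfwith sigma tau).
Proof.
move=> Hs Ht j; case: (eqVneq i j) => [<-|ne].
  by rewrite dfwith_in.
by rewrite dfwith_out.
Qed.

Lemma cont_const (R : realType) (n : nat) (A : 'I_n -> finType)
  (u : 'I_n -> prof A -> R) (mu : sprof R A) T k j (v : R) :
  (forall h', (k < size h')%N -> (size h' < T)%N -> Nash u (mu h')) ->
  (forall sigma, Nash u sigma -> exp_pay u j sigma = v) ->
  forall m h', (k < size h')%N -> (size h' + m <= T)%N ->
  cont_pay u j m mu h' = m%:R * v.
Proof.
move=> HN Hv; elim => [|m IH] h' H1 H2 /=; first by rewrite mul0r.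
have N : Nash u (mu h') by apply: HN => //; lia.
transitivity (\sum_(a : prof A) prob_prof (mu h') a * (u j a + m%:R * v)).
  apply: eq_bigr => a _; rewrite IH // size_rcons; lia.
rewrite pay_split (Hv _ N) (sum_prob N.1) mulr1.
by rewrite -natr1 mulrDl mul1r addrC.
Qed.

Lemma br_at (R : realType) (n : nat) (A : 'I_n -> finType)
  (u : 'I_n -> prof A -> R) (mu : sprof R A) T h j :
  SPE u T mu -> (size h < T)%N ->
  (forall h', (size h < size h')%N -> (size h' < T)%N -> Nash u (mu h')) ->
  in_IG u j -> best_response u (mu h) j.
Proof.
move=> [Hsp HR] Hsz HN [v Hv'] tau Htau.
have Hv : forall sigma, Nash u sigma -> exp_pay u j sigma = v.
  by move=> sigma Ns; apply/Hv'; exists sigma.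
have [_ Hdev] := HR h Hsz.
pose s : seq (prof A) -> {ffun A j -> R} :=
  fun h' => if h' is [::] then tau else mu (h ++ h') j.
have Hs : is_strategy (T - size h) s.
  move=> h'; case: h' => [|a h'] Hh' /=; first exact Htau.
  apply: (Hsp (h ++ a :: h')); move: Hh'; rewrite size_cat /=; lia.
have := Hdev j s Hs.
have [m' E] : exists m', (T - size h)%N = m'.+1.
  exists (T - size h).-1; lia.
rewrite /rep_pay E /=.
have Cm : forall a, cont_pay u j m' mu (rcons h a) = m'%:R * v.
  move=> a; apply: (cont_const HN Hv); rewrite size_rcons; lia.
have L1 : forall a, cont_pay u j m' (deviate (continuation mu h) s) [:: a] = m'%:R * v.
  move=> a; rewrite (@cont_congr _ _ _ _ _ _ _ (continuation mu h)).
    by rewrite cont_shift cats1 Cm.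
  by move=> h'' /=; rewrite /deviate /= dfwith_id.
have L2 : forall a, cont_pay u j m' (continuation mu h) [:: a] = m'%:R * v.
  by move=> a; rewrite cont_shift cats1 Cm.
under eq_bigr do rewrite L1.
under [X in _ <= X]eq_bigr do rewrite L2.
rewrite /deviate /continuation /= cats0 !pay_split.
have Mh := Hsp h Hsz.
rewrite (sum_prob Mh) (sum_prob (mixed_dfwith Mh Htau)) lerD2r.
done.
Qed.

Lemma exists_max (R : realType) (n : nat) (A : 'I_n -> finType)
  (u : 'I_n -> prof A -> R) (mu : sprof R A) T :
  forall d h, (T - size h <= d)%N -> (size h < T)%N -> ~ Nash u (mu h) ->
  exists h0, (size h0 < T)%N /\ ~ Nash u (mu h0) /\
    forall h', (size h0 < size h')%N -> (size h' < T)%N -> Nash u (mu h').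
Proof.
elim => [|d IH] h Hd Hsz HN; first lia.
case: (classic (exists h', (size h < size h')%N /\ (size h' < T)%N /\ ~ Nash u (mu h'))).
  move=> [h' [H1 [H2 H3]]]; apply: (IH h') => //; lia.
move=> Hno; exists h; split=> //; split=> // h' H1 H2.
apply: NNPP => H3; apply: Hno; exists h'; tauto.
Qed.

Unset Implicit Arguments. Set Strict Implicit.

Theorem mainTheorem20 (R : realType) (n : nat) (A : 'I_n -> finType)
  (u : 'I_n -> prof A -> R)
  (A_nonempty : forall i : 'I_n, (0 < #|A i|)%N) :
  (exists (T : nat) (mu : sprof R A),
      (0 < T)%N /\ SPE u T mu /\ locally_suboptimal u T mu) ->
  exists sigma_hat : mprof R A,
    is_mixed_profile sigma_hat /\
    (forall i : 'I_n, in_IG u i -> best_response u sigma_hat i) /\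
    (exists i : 'I_n, ~ best_response u sigma_hat i).
Proof.
move=> [T [mu [_ [Hspe [h [Hsz HN]]]]]].
have [h0 [Hsz0 [HN0 Hmax]]] := @exists_max _ _ _ u mu T (T - size h)%N h (leqnn _) Hsz HN.
exists (mu h0); have Mh : is_mixed_profile (mu h0) by apply: Hspe.1.
split=> //; split.
  by move=> i Hi; apply: (br_at Hspe Hsz0 Hmax Hi).
apply: NNPP => Hno; apply: HN0; split=> // i.
apply: NNPP => Hi; apply: Hno; by exists i.
Qed.
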